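(* Let $\lambda>0$, let $K$ be a $\lambda$-concave body in $\mathbb{R}^{n+1}$, and let $P$ be a $(k+1)$-dimensional linear subspace of $\mathbb{R}^{n+1}$ (with $0<k\leq n$). Then the orthogonal projection $K|P$ is a $\lambda$-concave body in $P$. Moreover, if $K$ is a $\lambda$-sausage body, then so is $K|P$.
   Context: A convex body is a compact convex set with non-empty interior; balls are closed. For $\lambda>0$, a convex body $K$ in a Euclidean space $E$ is $\lambda$-concave if for every $p\in\partial K$ there is a ball $B_{1/\lambda,p}\subset E$ of radius $1/\lambda$ whose boundary passes through $p$ such that $B_{1/\lambda,p}\cap U(p)\subseteq K\cap U(p)$ for some open neighborhood $U(p)$ of $p$ in $E$. A $\lambda$-sausage body is the convex hull of two (possibly coinciding) balls of radius $1/\lambda$. *)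

(* Defs.v *)
From HB Require Import structures.
From mathcomp Require Import all_boot all_order all_algebra.
From mathcomp Require Import all_classical all_reals topology normedtype.
Set Implicit Arguments. Unset Strict Implicit. Unset Printing Implicit Defensive.
Import Order.TTheory GRing.Theory Num.Theory numFieldNormedType.Exports.
Local Open Scope ring_scope.
Local Open Scope classical_set_scope.

(* Euclidean space R^m is modelled as row vectors 'rV[R]_m, with the
   standard Euclidean inner product and norm (defined explicitly, since the
   library norm on matrices is the sup norm). *)
Section Euclid.
Variables (R : realType) (m : nat).
Implicit Types (x y c z : 'rV[R]_m) (A S U : set 'rV[R]_m).

Definition edot x y : R := (x *m y^T) 0 0.
Definition enorm x : R := Num.sqrt (edot x x).

Definition eball c (r : R) : set 'rV[R]_m := [set x | enorm (x - c) <= r].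

(* Topological notions relative to an ambient flat S (a linear subspace,
   or the whole space setT), with the Euclidean metric. *)
Definition rel_open S U :=
  U `<=` S /\ forall y, U y -> exists2 e : R, 0 < e &
    forall z, S z -> enorm (z - y) < e -> U z.
Definition rel_int S A y :=
  S y /\ exists2 e : R, 0 < e & forall z, S z -> enorm (z - y) < e -> A z.
Definition rel_cl S A y :=
  S y /\ forall e : R, 0 < e -> exists z, A z /\ enorm (z - y) < e.
Definition rel_bd S A y := rel_cl S A y /\ ~ rel_int S A y.

Definition convex_set A :=
  forall x y (t : R), A x -> A y -> 0 <= t <= 1 -> A (t *: x + (1 - t) *: y).

Definition conv_hull A : set 'rV[R]_m :=
  [set x | forall C, convex_set C -> A `<=` C -> C x].

Definition convex_body_in S A :=
  A `<=` S /\ compact A /\ convex_set A /\ exists y, rel_int S A y.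

(* lambda-concave body in the flat S; balls in S are Euclidean balls
   centred in S intersected with S *)
Definition lconcave_in (lam : R) S A :=
  convex_body_in S A /\
  forall p, rel_bd S A p ->
    exists c, S c /\ enorm (p - c) = lam^-1 /\
      exists U, rel_open S U /\ U p /\
        (forall x, S x -> eball c lam^-1 x -> U x -> A x).

Definition lsausage_in (lam : R) S A :=
  exists c1 c2, S c1 /\ S c2 /\
    A = conv_hull ((eball c1 lam^-1 `&` S) `|` (eball c2 lam^-1 `&` S)).

End Euclid.

Definition subsp (R : realType) (m : nat) (P : 'M[R]_m) : set 'rV[R]_m :=
  [set x | (x <= P)%MS].

Definition oproj (R : realType) (m : nat) (P : 'M[R]_m) (K : set 'rV[R]_m)
  : set 'rV[R]_m :=
  [set y | subsp P y /\ exists x, K x /\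
     forall z, subsp P z -> edot (x - y) z = 0].

(* Main.v *)
Require Import Defs.
From HB Require Import structures.
From mathcomp Require Import all_boot all_order all_algebra.
From mathcomp Require Import all_classical all_reals topology normedtype.
From mathcomp Require Import ring lra.
Import numFieldNormedType.Exports.
Set Implicit Arguments. Unset Strict Implicit. Unset Printing Implicit Defensive.
Import Order.TTheory GRing.Theory Num.Theory.
Local Open Scope ring_scope.
Local Open Scope classical_set_scope.
Section Basics.
Variables (R : realType) (m : nat).
Implicit Types x y z : 'rV[R]_m.

Lemma edotE x y : edot x y = \sum_j x 0 j * y 0 j.
Proof. by rewrite /edot mxE; apply: eq_bigr => j _; rewrite mxE. Qed.

Lemma edotC x y : edot x y = edot y x.
Proof. by rewrite !edotE; apply: eq_bigr => j _; exact: mulrC. Qed.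

Lemma edotDl x y z : edot (x + y) z = edot x z + edot y z.
Proof. by rewrite !edotE -big_split; apply: eq_bigr => j _; rewrite mxE mulrDl. Qed.

Lemma edotZl a x z : edot (a *: x) z = a * edot x z.
Proof. by rewrite !edotE mulr_sumr; apply: eq_bigr => j _; rewrite mxE mulrA. Qed.

Lemma edotNl x z : edot (- x) z = - edot x z.
Proof. by rewrite !edotE -sumrN; apply: eq_bigr => j _; rewrite mxE mulNr. Qed.

Lemma edotBl x y z : edot (x - y) z = edot x z - edot y z.
Proof. by rewrite edotDl edotNl. Qed.

Lemma edotDr x y z : edot z (x + y) = edot z x + edot z y.
Proof. by rewrite edotC edotDl !(edotC z). Qed.
Lemma edotZr a x z : edot z (a *: x) = a * edot z x.
Proof. by rewrite edotC edotZl (edotC z). Qed.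
Lemma edotNr x z : edot z (- x) = - edot z x.
Proof. by rewrite edotC edotNl (edotC z). Qed.
Lemma edotBr x y z : edot z (x - y) = edot z x - edot z y.
Proof. by rewrite edotDr edotNr. Qed.

Lemma edot0l z : edot 0 z = 0.
Proof. by rewrite edotE big1 // => j _; rewrite mxE mul0r. Qed.
Lemma edot0r z : edot z 0 = 0.
Proof. by rewrite edotC edot0l. Qed.

Lemma edot_ge0 x : 0 <= edot x x.
Proof. by rewrite edotE; apply: sumr_ge0 => j _; rewrite -expr2 sqr_ge0. Qed.

Lemma edot_eq0 x : edot x x = 0 -> x = 0.
Proof.
rewrite edotE => /psumr_eq0P H; apply/matrixP => i j; rewrite (ord1 i) mxE.
have /eqP := H (fun j _ => ltac:(by rewrite -expr2 sqr_ge0)) j isT; rewrite mulf_eq0.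
by case/orP => /eqP.
Qed.

Lemma enorm_ge0 x : 0 <= enorm x.
Proof. exact: sqrtr_ge0. Qed.

Lemma enorm_sqr x : enorm x ^+ 2 = edot x x.
Proof. by rewrite /enorm sqr_sqrtr // edot_ge0. Qed.

Lemma enorm_ltP x e : 0 < e -> (enorm x < e) = (edot x x < e ^+ 2).
Proof.
move=> e0; rewrite /enorm -[e in LHS](ger0_norm (ltW e0)) -sqrtr_sqr ltr_sqrt //.
by rewrite exprn_gt0.
Qed.

Lemma enorm_leP x e : 0 <= e -> (enorm x <= e) = (edot x x <= e ^+ 2).
Proof.
move=> e0; rewrite /enorm -[e in LHS](ger0_norm e0) -sqrtr_sqr ler_sqrt //.
by rewrite exprn_ge0.
Qed.

Lemma enormN x : enorm (- x) = enorm x.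
Proof. by rewrite /enorm edotNl edotNr opprK. Qed.

Lemma enorm0 : enorm (0 : 'rV[R]_m) = 0.
Proof. by rewrite /enorm edot0l sqrtr0. Qed.

Lemma mxnorm_le_enorm x : `|x| <= enorm x.
Proof.
rewrite [leLHS]/Num.Def.normr /= mx_normrE (bigmax_le _ (enorm_ge0 _)) // => -[i j] _ /=.
rewrite (ord1 i) /enorm -sqrtr_sqr ler_sqrt ?edot_ge0 // edotE.
rewrite (bigD1 j) //= -expr2 lerDl; apply: sumr_ge0 => k _.
by rewrite -expr2 sqr_ge0.
Qed.

Lemma entry_le_norm n1 n2 (A : 'M[R]_(n1, n2)) i j : `|A i j| <= `|A|.
Proof.
by rewrite [leRHS]/Num.Def.normr /= mx_normrE; exact: (le_bigmax _ _ (i, j)).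
Qed.

Lemma mulmx_norm_le n (M : 'M[R]_(m, n)) x :
  `|x *m M| <= (`|M| *+ m) * `|x|.
Proof.
have H0 : 0 <= (`|M| *+ m) * `|x| by rewrite mulr_ge0 // mulrn_wge0.
rewrite [leLHS]/Num.Def.normr /= mx_normrE (bigmax_le _ H0) // => -[i j] _ /=.
rewrite mxE (le_trans (ler_norm_sum _ _ _)) //.
apply: le_trans (_ : \sum_(k < m) `|M| * `|x| <= _); last first.
  by rewrite sumr_const card_ord mulrnAl.
apply: ler_sum => k _; rewrite normrM mulrC ler_pM //.
exact: entry_le_norm. exact: entry_le_norm.
Qed.

End Basics.
Section Proj.
Variables (R : realType) (m : nat) (P : 'M[R]_m).
Implicit Types x y z : 'rV[R]_m.

Definition PB := locked (row_base P).
Definition PG := PB *m PB^T.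
Definition PM := PB^T *m invmx PG *m PB.
Definition proj x := x *m PM.

Lemma PG_unit : PG \in unitmx.
Proof.
rewrite -row_free_unit; apply: inj_row_free => v vG.
have H : edot (v *m PB) (v *m PB) = 0.
  by rewrite /edot trmx_mul mulmxA -(mulmxA v) -/PG vG mul0mx mxE.
have := edot_eq0 H; move/eqP; rewrite mulmx_free_eq0 //; last by rewrite /PB -lock row_base_free.
by move/eqP.
Qed.

Lemma sub_PB z : (z <= P)%MS -> (z <= PB)%MS.
Proof. by rewrite /PB -lock eq_row_base. Qed.

Lemma proj_sub x : (proj x <= P)%MS.
Proof.
rewrite /proj /PM mulmxA; apply: submx_trans (submxMl _ _) _.
by rewrite /PB -lock eq_row_base.
Qed.

Lemma proj_orth x z : (z <= P)%MS -> edot (x - proj x) z = 0.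
Proof.
move/sub_PB/submxP => [D ->].
have H : (x - proj x) *m PB^T = 0.
  rewrite mulmxBl /proj /PM !mulmxA -(mulmxA _ PB) -/PG.
  by rewrite -(mulmxA _ (invmx PG)) mulVmx ?PG_unit // mulmx1 subrr.
by rewrite /edot trmx_mul mulmxA H mul0mx mxE.
Qed.

Lemma sub_opp z : (z <= P)%MS -> ((- z)%R <= P)%MS.
Proof. by move=> h; rewrite -scaleN1r scalemx_sub. Qed.

Lemma sub_comb a b y z : (y <= P)%MS -> (z <= P)%MS -> ((a *: y + b *: z)%R <= P)%MS.
Proof. by move=> hy hz; apply: addmx_sub; apply: scalemx_sub. Qed.

Lemma sub_add y z : (y <= P)%MS -> (z <= P)%MS -> ((y + z)%R <= P)%MS.
Proof. by move=> hy hz; apply: addmx_sub. Qed.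

Lemma sub_sub y z : (y <= P)%MS -> (z <= P)%MS -> ((y - z)%R <= P)%MS.
Proof. by move=> hy hz; apply: addmx_sub => //; apply: sub_opp. Qed.

Lemma proj_uniq x y : (y <= P)%MS ->
  (forall z, (z <= P)%MS -> edot (x - y) z = 0) -> y = proj x.
Proof.
move=> hy hxy.
have hd : ((proj x - y)%R <= P)%MS by rewrite sub_sub // proj_sub.
have E : proj x - y = (x - y) - (x - proj x) by apply/esym; rewrite opprB addrC addrA subrK.
have : edot (proj x - y) (proj x - y) = 0.
  by rewrite {1}E edotBl hxy // proj_orth // subrr.
by move/edot_eq0/eqP; rewrite subr_eq0 => /eqP.
Qed.

Lemma proj_id y : (y <= P)%MS -> proj y = y.
Proof. by move=> hy; apply/esym/proj_uniq => // z _; rewrite subrr edot0l. Qed.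

Lemma projD x y : proj (x + y) = proj x + proj y.
Proof. by rewrite /proj mulmxDl. Qed.
Lemma projZ a x : proj (a *: x) = a *: proj x.
Proof. by rewrite /proj scalemxAl. Qed.
Lemma projN x : proj (- x) = - proj x.
Proof. by rewrite /proj mulNmx. Qed.
Lemma projB x y : proj (x - y) = proj x - proj y.
Proof. by rewrite projD projN. Qed.

Lemma proj_cont : continuous (proj : 'rV[R]_m -> 'rV[R]_m).
Proof.
move=> x; apply/(@cvgrPdist_lt _ _ _ _ (nbhs_filter x)) => e e0.
set C := `|PM| *+ m + 1.
have C0 : 0 < C by rewrite ltr_wpDl // mulrn_wge0.
apply/(@nbhs_normP R ('rV[R]_m : pseudoMetricNormedZmodType R)); exists (e / C); first by rewrite /= divr_gt0.
move=> y /= hy; rewrite -projB /proj.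
apply: le_lt_trans (mulmx_norm_le _ _) _.
apply: le_lt_trans (_ : C * `|x - y| < _).
  by rewrite ler_wpM2r // lerDl.
by rewrite mulrC -ltr_pdivlMr.
Qed.

Lemma pythag x : edot x x = edot (proj x) (proj x) + edot (x - proj x) (x - proj x).
Proof.
have h1 : edot (x - proj x) (proj x) = 0 by rewrite proj_orth // proj_sub.
have h2 : edot (proj x) (x - proj x) = 0 by rewrite edotC.
have E : x = proj x + (x - proj x) by rewrite addrC subrK.
transitivity (edot (proj x + (x - proj x)) (proj x + (x - proj x))); first by rewrite -E.
by rewrite (edotDl (proj x) (x - proj x)) (edotDr (proj x) (x - proj x) (proj x)) (edotDr (proj x) (x - proj x) (x - proj x)) h1 h2 addr0 add0r.
Qed.

Lemma edot_proj_le x : edot (proj x) (proj x) <= edot x x.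
Proof. by rewrite [X in _ <= X](pythag x) lerDl edot_ge0. Qed.

End Proj.
Lemma arith_key (R : realFieldType) (a b d t s e G gq : R) :
  0 < a -> 0 <= b -> 0 < d -> 0 < t -> t <= 1 -> t * a <= d^+2/4 ->
  0 < s -> b <= s*(t*a)/2 -> 0 < e -> e <= 1 -> e <= d/2 ->
  e * (2*(1+s)) <= t*a -> 0 <= G -> G < e^+2 -> 0 <= s^+2*G + 2*s*gq + b ->
  G + t^+2*a < d^+2 /\ G + t^+2*a - 2*gq - 2*t*a <= 0.
Proof.
move=> ha hb hd ht ht1 hta hs hbs he he1 hed hes hG hGe hAM.
have hee : e^+2 <= e by rewrite expr2 ger_pMl.
have hG1 : G <= e by apply: le_trans (ltW hGe) hee.
have ht2 : t^+2 * a <= t * a by rewrite expr2 -mulrA ger_pMl // mulr_gt0.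
split.
  have : e^+2 <= d^+2/4.
    rewrite (_ : d^+2/4 = (d/2)^+2); last by rewrite expr_div_n; congr (_ / _); rewrite expr2; lra.
    by rewrite lerXn2r // ?nnegrE ltW // divr_gt0.
  move=> hed2; have hd2 : 0 < d^+2 by rewrite exprn_gt0.
  lra.
have h1 : (1 + s) * G <= t * a / 2.
  have : (1 + s) * G <= (1 + s) * e by rewrite ler_wpM2l // addr_ge0 // ltW.
  move=> h; apply: le_trans h _; rewrite ler_pdivlMr //; lra.
have key : s * (G + t^+2*a - 2*gq - 2*t*a) <= 0.
  have E : s * (G + t^+2*a - 2*gq - 2*t*a) = (s * G + s^+2 * G) + s * (t^+2*a) - (s^+2*G + 2*s*gq + b) + b - 2*s*(t*a).
    by rewrite !expr2; ring.
  rewrite E.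
  have h2 : s * G + s^+2 * G = s * ((1 + s) * G) by rewrite expr2; ring.
  rewrite h2.
  have h3 : s * ((1+s) * G) <= s * (t * a / 2) by rewrite ler_wpM2l // ltW.
  have h4 : s * (t^+2*a) <= s * (t * a) by rewrite ler_wpM2l // ltW.
  have h5 : s * (t * a / 2) + s * (t * a) + b - 2 * s * (t * a) <= 0.
    have -> : s * (t * a / 2) = s * (t * a) / 2 by rewrite mulrA.
    lra.
  lra.
by move: key; rewrite pmulr_rle0.
Qed.
Ltac vec := apply/matrixP => ? ?; rewrite !mxE; ring.

Section Main.
Variables (R : realType) (m : nat) (P : 'M[R]_m).
Implicit Types (x y z c : 'rV[R]_m) (K A : set 'rV[R]_m).

Lemma orth_sub_lin x p y : (p <= P)%MS -> (forall u, (u <= P)%MS -> edot (x - p) u = 0) ->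
  (y <= P)%MS -> forall u, (u <= P)%MS -> edot ((y + (x - p)) - y) u = 0.
Proof.
move=> _ h _ u hu; rewrite (_ : (y + (x - p)) - y = x - p); last by vec.
exact: h.
Qed.

Lemma oproj_eq K : oproj P K = proj P @` K.
Proof.
apply/seteqP; split.
  move=> y [hy [x [Kx hxy]]]; exists x => //.
  by apply/esym/proj_uniq.
move=> y [x Kx <-]; split; first exact: proj_sub.
by exists x; split => // z hz; apply: proj_orth.
Qed.

Lemma oproj_compact K : compact K -> compact (oproj P K).
Proof.
move=> cK; rewrite oproj_eq; apply: continuous_compact => //.
apply: continuous_subspaceT; exact: proj_cont.
Qed.

Lemma oproj_cl K p : compact K -> rel_cl (subsp P) (oproj P K) p -> oproj P K p.
Proof.
move=> cK [hp hcl].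
have cl : closed (oproj P K).
  apply: compact_closed; last exact: oproj_compact.
  exact: (@norm_hausdorff R ('rV[R]_m : pseudoMetricNormedZmodType R)).
apply: cl => B nB.
have [e e0 hB] := (@nbhs_normP R ('rV[R]_m : pseudoMetricNormedZmodType R) p B).1 nB.
have [z [Az hz]] := hcl e e0.
exists z; split => //; apply: hB => /=.
by rewrite distrC; apply: le_lt_trans (mxnorm_le_enorm _) hz.
Qed.

Lemma oproj_convex K : convex_set K -> convex_set (oproj P K).
Proof.
move=> cK y1 y2 t [h1 [x1 [K1 o1]]] [h2 [x2 [K2 o2]]] ht.
split; first exact: sub_comb.
exists (t *: x1 + (1 - t) *: x2); split; first exact: cK.
move=> u hu.
rewrite (_ : _ - _ = t *: (x1 - y1) + (1 - t) *: (x2 - y2)); last by vec.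
by rewrite edotDl !edotZl o1 // o2 // !mulr0 addr0.
Qed.

Lemma oproj_int K y : rel_int setT K y -> rel_int (subsp P) (oproj P K) (proj P y).
Proof.
move=> [_ [e e0 he]]; split; first exact: proj_sub.
exists e => // z hz hze; split => //.
exists (z + (y - proj P y)); split.
  apply: he => //; rewrite (_ : _ - _ = z - proj P y) //; vec.
move=> u hu; rewrite (_ : _ - _ = y - proj P y); last by vec.
exact: proj_orth.
Qed.

End Main.
Section Key.
Variables (R : realType) (m : nat) (P : 'M[R]_m).
Implicit Types (x y z c : 'rV[R]_m) (K A U : set 'rV[R]_m).

Lemma tangent K U x p c (r : R) :
  (p <= P)%MS -> (forall u, (u <= P)%MS -> edot (x - p) u = 0) ->
  enorm (x - c) = r -> rel_open setT U -> U x ->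
  (forall z, eball c r z -> U z -> K z) ->
  ~ rel_int (subsp P) (oproj P K) p -> (c - x <= P)%MS.
Proof.
move=> hp hxp hr [_ hU] Ux hball hnint.
set v := c - x; set q := proj P v; set w := v - q.
have [w0|wn0] := eqVneq w 0.
  have -> : v = q by apply/eqP; rewrite -subr_eq0 -/w w0.
  exact: proj_sub.
exfalso; apply: hnint; split => //.
have [d d0 hd] := hU x Ux.
set a := edot w w; set b := edot q q.
have ha : 0 < a.
  rewrite lt0r edot_ge0 andbT; apply/eqP => /edot_eq0 h; by rewrite h eqxx in wn0.
have hb : 0 <= b := edot_ge0 _.
have hwP : forall u, (u <= P)%MS -> edot w u = 0 by move=> u hu; exact: proj_orth.
set t := Num.min 1 (d^+2 / (4 * a)).
have ht : 0 < t by rewrite lt_min ltr01 divr_gt0 // ?exprn_gt0 // mulr_gt0.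
have ht1 : t <= 1 by rewrite ge_min lexx.
have hta : t * a <= d^+2/4.
  have : t <= d^+2 / (4 * a) by rewrite ge_min lexx orbT.
  rewrite ler_pdivlMr ?mulr_gt0 // => h.
  rewrite ler_pdivlMr //; apply: le_trans h; rewrite le_eqVlt; apply/orP; left; apply/eqP; ring.
set s := 2 * b / (t * a) + 1.
have hs : 0 < s by rewrite ltr_wpDl // divr_ge0 ?mulr_ge0 // ltW // mulr_gt0.
have hbs : b <= s * (t * a) / 2.
  rewrite /s mulrDl -mulrA mulVf ?mulr1; last by rewrite gt_eqF // mulr_gt0.
  have tap : 0 < t * a by rewrite mulr_gt0.
  rewrite mulrDl mul1r; lra.
set e := Num.min 1 (Num.min (d/2) (t * a / (2 * (1 + s)))).
have hs1 : 0 < 2 * (1 + s) by rewrite mulr_gt0 // addr_gt0.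
have he : 0 < e by rewrite !lt_min ltr01 !divr_gt0 // mulr_gt0.
have he1 : e <= 1 by rewrite ge_min lexx.
have hed : e <= d/2 by rewrite !ge_min lexx orbT.
have hes : e * (2 * (1 + s)) <= t * a.
  rewrite -ler_pdivlMr //; by rewrite !ge_min lexx !orbT.
exists e => // y hy hye; split => //.
set g := y - p.
have hg : (g <= P)%MS by exact: sub_sub.
set G := edot g g.
have hG : 0 <= G := edot_ge0 _.
have hGe : G < e^+2 by rewrite -enorm_ltP.
have hAM : 0 <= s^+2 * G + 2 * s * edot g q + b.
  have := edot_ge0 (s *: g + q).
  rewrite edotDl !edotDr !edotZl !edotZr (edotC q g); congr (_ <= _); rewrite /G /b expr2; ring.
have [k1 k2] := arith_key ha hb d0 ht ht1 hta hs hbs he he1 hed hes hG hGe hAM.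
have hgw : edot g w = 0 by rewrite edotC hwP.
have hqw : edot q w = 0 by rewrite edotC hwP // proj_sub.
have hwg : edot w g = 0 by rewrite hwP.
have hwq : edot w q = 0 by rewrite hwP // proj_sub.
exists (x + g + t *: w); split.
  apply: hball.
    rewrite /eball /= -hr enorm_leP ?enorm_ge0 // enorm_sqr.
    rewrite (_ : x + g + t *: w - c = g + t *: w - (q + w)); last by rewrite /w /q /v; vec.
    rewrite (_ : x - c = - (q + w)); last by rewrite /w /q /v; vec.
    rewrite edotNl edotNr opprK.
    have Ea : edot w w = a by []. have Eb : edot q q = b by []. have EG : edot g g = G by [].
    clearbody G g a b w q v.
    rewrite !(edotNl, edotNr, edotBl, edotBr, edotDl, edotDr, edotZl, edotZr) hgw hqw hwg hwq Ea Eb EG.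
    rewrite (edotC q g).
    move: k2; rewrite expr2 => k2; lra.
  apply: hd => //; rewrite (_ : x + g + t *: w - x = g + t *: w); last by vec.
  have Ea : edot w w = a by []. have EG : edot g g = G by [].
  clearbody G g a b w q v.
  rewrite enorm_ltP // !(edotDl, edotDr, edotZl, edotZr) hgw hwg Ea EG.
  by move: k1; rewrite expr2 => k1; lra.
move=> u hu.
rewrite (_ : x + g + t *: w - y = (x - p) + t *: w); last by rewrite /g; vec.
by rewrite edotDl edotZl hxp // hwP // mulr0 addr0.
Qed.

End Key.
Section Saus.
Variables (R : realType) (m : nat) (P : 'M[R]_m).
Implicit Types (x y z c : 'rV[R]_m) (K A U : set 'rV[R]_m).

Lemma conv_hull_convex A : convex_set (conv_hull A).
Proof. by move=> x y t hx hy ht C cC hAC; apply: (cC x y t) => //; [apply: hx | apply: hy]. Qed.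

Lemma sub_conv_hull A : A `<=` conv_hull A.
Proof. by move=> a Aa C _ hAC; apply: hAC. Qed.

Lemma proj_comb t x y : proj P (t *: x + (1 - t) *: y) = t *: proj P x + (1 - t) *: proj P y.
Proof. by rewrite projD !projZ. Qed.

Lemma proj_hull A : proj P @` conv_hull A = conv_hull (proj P @` A).
Proof.
apply/seteqP; split.
  move=> _ [x hx <-] C cC hC.
  apply: (hx (proj P @^-1` C)).
    by move=> u v t hu hv ht /=; rewrite proj_comb; apply: cC.
  by move=> a Aa /=; apply: hC; exists a.
move=> y hy; apply: hy.
  move=> _ _ t [x1 h1 <-] [x2 h2 <-] ht.
  exists (t *: x1 + (1 - t) *: x2); last exact: proj_comb.
  exact: conv_hull_convex.
by move=> _ [a Aa <-]; exists a => //; apply: sub_conv_hull.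
Qed.

Lemma proj_ball c (r : R) :
  proj P @` (eball c r `&` setT) = eball (proj P c) r `&` subsp P.
Proof.
apply/seteqP; split.
  move=> _ [z [hz _] <-]; split; last exact: proj_sub.
  have r0 : 0 <= r by apply: le_trans hz; exact: enorm_ge0.
  move: hz; rewrite /eball /= !enorm_leP // -projB => h.
  exact: le_trans (edot_proj_le _ _) h.
move=> y [hy hP]; exists (y + (c - proj P c)).
  split => //; rewrite /eball /= (_ : y + (c - proj P c) - c = y - proj P c) //; vec.
by rewrite projD projB (proj_id (proj_sub _ _)) proj_id // subrr addr0.
Qed.

End Saus.

Theorem lemma2p4 (R : realType) (n k : nat) (lam : R)
    (K : set 'rV[R]_(n.+1)) (P : 'M[R]_(n.+1)) :
  0 < lam -> (0 < k)%N -> (k <= n)%N -> \rank P = k.+1 ->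
  lconcave_in lam setT K ->
  lconcave_in lam (subsp P) (oproj P K) /\
  (lsausage_in lam setT K -> lsausage_in lam (subsp P) (oproj P K)).
Proof.
move=> lam0 _ _ _ [[_ [cK [convK [y0 hy0]]]] hloc].
split; last first.
  move=> [c1 [c2 [_ [_ hK]]]].
  exists (proj P c1), (proj P c2); split; first exact: proj_sub.
  split; first exact: proj_sub.
  by rewrite oproj_eq hK proj_hull image_setU !proj_ball.
split.
  split; first by move=> y [].
  split; first exact: oproj_compact.
  split; first exact: oproj_convex.
  by exists (proj P y0); apply: oproj_int.
move=> p [hcl hnint].
have [hp [x [Kx hxp]]] := oproj_cl cK hcl.
have xbd : rel_bd setT K x.
  split.
    split => // e e0; exists x; split => //.
    by rewrite subrr enorm0.
  move=> [_ [e e0 he]]; apply: hnint; split => //.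
  exists e => // z hz hze; split => //.
  exists (z + (x - p)); split.
    by apply: he => //; rewrite (_ : _ - _ = z - p) //; vec.
  move=> u hu; rewrite (_ : _ - _ = x - p); last by vec.
  exact: hxp.
have [c [_ [hr [U [hU [Ux hball]]]]]] := hloc x xbd.
have hcx : (c - x <= P)%MS.
  apply: (tangent hp hxp hr hU Ux _ hnint) => z hz hUz; exact: hball.
exists (p + (c - x)); split; first exact: sub_add.
split.
  by rewrite (_ : p - (p + (c - x)) = x - c) //; vec.
exists [set y | subsp P y /\ U (y + (x - p))]; split.
  split; first by move=> y [].
  move=> y [hy hUy]; have [_ hUo] := hU; have [d d0 hd] := hUo _ hUy.
  exists d => // z hz hzd; split => //; apply: hd => //.
  by rewrite (_ : _ - _ = z - y) //; vec.
split.
  split => //; rewrite (_ : p + (x - p) = x) //; vec.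
move=> y hy hyb [_ hUy]; split => //.
exists (y + (x - p)); split.
  apply: hball => //; rewrite /eball /= (_ : _ - _ = y - (p + (c - x))) //; vec.
move=> u hu; rewrite (_ : _ - _ = x - p); last by vec.
exact: hxp.
Qed.
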